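(* Let $q\in[0,1)$ and let $R$ be a matrix-valued rational function analytic at the origin. Suppose $R(z)=C(I_N-zA)^{-1}B=C'(I_{N'}-zA')^{-1}B'$ near the origin for two (not necessarily minimal) realizations. Then, near the origin, \[ C\prod_{j=0}^\infty\bigl(I_N-z(1-q)q^jA\bigr)^{-1}B=C'\prod_{j=0}^\infty\bigl(I_{N'}-z(1-q)q^jA'\bigr)^{-1}B' , \] i.e. the function $T(R)(z,q)=C\prod_{j=0}^\infty(I_N-z(1-q)q^jA)^{-1}B$ does not depend on the chosen realization.
   Context: Convention $q^0=1$. Matrices have compatible sizes: $C\in\mathbb C^{n\times N}$, $A\in\mathbb C^{N\times N}$, $B\in\mathbb C^{N\times m}$, similarly for the primed triple. *)

(* Defs.v *)
From HB Require Import structures.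
From mathcomp Require Import all_boot all_order all_algebra.
From mathcomp Require Import complex.
From mathcomp Require Import all_classical all_reals all_analysis.
Set Implicit Arguments. Unset Strict Implicit. Unset Printing Implicit Defensive.
Import Order.TTheory GRing.Theory Num.Theory.
Import numFieldNormedType.Exports.
Local Open Scope ring_scope.
Local Open Scope complex_scope.

(* Equip the concrete complex numbers R[i] (R : realType) with the canonical
   normed-module / topological structure of a numClosedFieldType, exactly as
   MathComp-Analysis does generically in [numFieldNormedType]. *)
Section ComplexNormed.
Variable (R : realType).
HB.instance Definition _ := GRing.ComAlgebra.copy R[i] (R[i])^o.
HB.instance Definition _ := Vector.copy R[i] (R[i])^o.
HB.instance Definition _ := NormedModule.copy R[i] (R[i])^o.
HB.instance Definition _ := Num.ClosedField.on R[i].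
End ComplexNormed.

Definition qfactor (R : realType) (N : nat) (q : R) (A : 'M[R[i]]_N)
  (z : R[i]) (j : nat) : 'M[R[i]]_N :=
  invmx (1%:M - (z * (1 - q%:C) * (q%:C) ^+ j) *: A).

Fixpoint qpartial (R : realType) (N : nat) (q : R) (A : 'M[R[i]]_N)
  (z : R[i]) (n : nat) : 'M[R[i]]_N :=
  match n with
  | 0 => 1%:M
  | n.+1 => qpartial q A z n *m qfactor q A z n
  end.

(* Main.v *)
Require Import Defs.
From HB Require Import structures.
From mathcomp Require Import all_boot all_order all_algebra.
From mathcomp Require Import complex.
From mathcomp Require Import all_classical all_reals all_analysis.
Import Order.TTheory GRing.Theory Num.Theory.
Import numFieldNormedType.Exports.
Local Open Scope ring_scope.
Local Open Scope complex_scope.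
Local Open Scope classical_set_scope.
From mathcomp Require Import lra ring.
Notation Re := complex.Re.
Notation Im := complex.Im.
Section Norms.
Variable R : realType.
Definition cn (x : R[i]) : R := Num.sqrt (Re x ^+ 2 + Im x ^+ 2).
Lemma cnE (x : R[i]) : `|x| = (cn x)%:C.
Proof. by rewrite normc_def. Qed.
Lemma cn_ge0 x : 0 <= cn x. Proof. exact: sqrtr_ge0. Qed.
Lemma cnM x y : cn (x * y) = cn x * cn y.
Proof. apply: complexI. by rewrite -cnE normrM !cnE -rmorphM. Qed.
Lemma cnD x y : cn (x + y) <= cn x + cn y.
Proof. by rewrite -lecR -cnE (_ : (cn x + cn y)%:C = `|x| + `|y|) ?ler_normD // !cnE -rmorphD. Qed.
Lemma cnN x : cn (- x) = cn x.
Proof. by apply: complexI; rewrite -!cnE normrN. Qed.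
Lemma cn0 : cn 0 = 0. Proof. by apply: complexI; rewrite -cnE normr0. Qed.
Lemma cn1 : cn 1 = 1. Proof. by apply: complexI; rewrite -cnE normr1. Qed.
Lemma cn_eq0 x : (cn x == 0) = (x == 0).
Proof. apply/eqP/eqP => h; last by rewrite h; exact: cn0. apply/normr0_eq0; rewrite cnE h; reflexivity. Qed.
Lemma cnR (r : R) : cn r%:C = `|r|.
Proof. by rewrite /cn /= expr0n /= addr0 sqrtr_sqr. Qed.
Lemma cn_Re x : `|Re x| <= cn x.
Proof. rewrite /cn -sqrtr_sqr ler_sqrt ?lerDl ?sqr_ge0 //. exact: addr_ge0 (sqr_ge0 _) (sqr_ge0 _). Qed.
Lemma cn_Im x : `|Im x| <= cn x.
Proof. rewrite /cn -sqrtr_sqr ler_sqrt ?lerDr ?sqr_ge0 //. exact: addr_ge0 (sqr_ge0 _) (sqr_ge0 _). Qed.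
Lemma cn_ReIm x : cn x <= `|Re x| + `|Im x|.
Proof.
rewrite /cn -(ger0_norm (addr_ge0 (normr_ge0 (Re x)) (normr_ge0 (Im x)))).
rewrite -sqrtr_sqr ler_sqrt; last exact: sqr_ge0.
rewrite sqrrD -(real_normK (num_real (Re x))) -(real_normK (num_real (Im x))).
have := normr_ge0 (Re x); have := normr_ge0 (Im x); nra.
Qed.
Lemma cn_sum (I : finType) (f : I -> R[i]) : cn (\sum_i f i) <= \sum_i cn (f i).
Proof.
elim/big_ind2: _ => [|a b c d h1 h2|i _]; first by rewrite cn0.
  exact: le_trans (cnD _ _) (lerD h1 h2).
exact: lexx.
Qed.

Definition nu {a b : nat} (X : 'M[R[i]]_(a,b)) : R := \sum_i \sum_j cn (X i j).
Lemma nu_ge0 a b (X : 'M[R[i]]_(a,b)) : 0 <= nu X.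
Proof. by apply: sumr_ge0 => i _; apply: sumr_ge0 => j _; exact: cn_ge0. Qed.
Lemma nuD a b (X Y : 'M[R[i]]_(a,b)) : nu (X + Y) <= nu X + nu Y.
Proof.
rewrite /nu -big_split /=; apply: ler_sum => i _; rewrite -big_split /=.
by apply: ler_sum => j _; rewrite mxE; exact: cnD.
Qed.
Lemma nuN a b (X : 'M[R[i]]_(a,b)) : nu (- X) = nu X.
Proof. by apply: eq_bigr => i _; apply: eq_bigr => j _; rewrite mxE cnN. Qed.
Lemma nuZ a b c (X : 'M[R[i]]_(a,b)) : nu (c *: X) = cn c * nu X.
Proof.
rewrite /nu mulr_sumr; apply: eq_bigr => i _; rewrite mulr_sumr.
by apply: eq_bigr => j _; rewrite mxE cnM.
Qed.
Lemma nu_entry a b (X : 'M[R[i]]_(a,b)) i j : cn (X i j) <= nu X.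
Proof.
rewrite /nu (bigD1 i) //= (bigD1 j) //= -addrA lerDl.
apply: addr_ge0; first by apply: sumr_ge0 => k _; exact: cn_ge0.
by apply: sumr_ge0 => k _; apply: sumr_ge0 => l _; exact: cn_ge0.
Qed.
Lemma nu_eq0 a b (X : 'M[R[i]]_(a,b)) : nu X = 0 -> X = 0.
Proof.
move=> h; apply/matrixP => i j; rewrite mxE; apply/eqP; rewrite -cn_eq0.
by rewrite eq_le cn_ge0 andbT -h nu_entry.
Qed.
Lemma nuM a b c (X : 'M[R[i]]_(a,b)) (Y : 'M[R[i]]_(b,c)) : nu (X *m Y) <= nu X * nu Y.
Proof.
apply: (@le_trans _ _ (\sum_i \sum_j cn (X i j) * \sum_k cn (Y j k))).
  rewrite /nu; apply: ler_sum => i _.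
  apply: (@le_trans _ _ (\sum_k \sum_j cn (X i j) * cn (Y j k))).
    apply: ler_sum => k _; rewrite mxE; apply: le_trans; first exact: cn_sum.
       apply: ler_sum => j _; rewrite cnM; exact: lexx.
  by rewrite exchange_big /=; apply: ler_sum => j _; rewrite mulr_sumr; exact: lexx.
rewrite /nu mulr_suml; apply: ler_sum => i _; rewrite mulr_suml.
apply: ler_sum => j _; apply: ler_wpM2l; first exact: cn_ge0.
rewrite (bigD1 j) //= lerDl; apply: sumr_ge0 => k _; apply: sumr_ge0 => l _; exact: cn_ge0.
Qed.
Lemma nu1 N : nu (1%:M : 'M[R[i]]_N) = N%:R.
Proof.
rewrite /nu -[X in X%:R]card_ord -sumr_const; apply: eq_bigr => i _.
rewrite (bigD1 i) //= big1 ?addr0; first by rewrite mxE eqxx cn1.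
by move=> j /negPf ji; rewrite mxE eq_sym ji /= cn0.
Qed.
Lemma nu0 a b : nu (0 : 'M[R[i]]_(a,b)) = 0.
Proof. by rewrite /nu big1 // => i _; rewrite big1 // => j _; rewrite mxE cn0. Qed.
End Norms.
Arguments cn {R}.
Arguments nu {R a b}.
Arguments nu_ge0 {R a b}. Arguments nuD {R a b}. Arguments nuN {R a b}. Arguments nuZ {R a b}.
Arguments nu_entry {R a b}. Arguments nu_eq0 {R a b X}. Arguments nuM {R a b c}. Arguments nu1 {R}.
Arguments nu0 {R a b}.
Arguments cn_ge0 {R}. Arguments cnM {R}. Arguments cnD {R}. Arguments cnN {R}. Arguments cn_eq0 {R}.
Arguments cnR {R}. Arguments cn_Re {R}. Arguments cn_Im {R}. Arguments cn_ReIm {R}. Arguments cnE {R}.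
Section Cvg.
Variable R : realType.
Implicit Types (u : nat -> R[i]) (e : nat -> R).

Lemma ev_lt e (eps : R) : e @ \oo --> 0 -> 0 < eps -> exists N0, forall n, (N0 <= n)%N -> e n < eps.
Proof.
move=> /cvgrPdist_lt /(_ eps) h /h [N0 _ hN0]; exists N0 => n /hN0 /=.
by rewrite sub0r normrN => /(le_lt_trans (ler_norm _)).
Qed.

Lemma real_cauchy (v : nat -> R) e : e @ \oo --> 0 ->
  (forall n k, `|v (n + k)%N - v n| <= e n) -> cvg (v @ \oo).
Proof.
move=> he hv; apply/cauchy_cvgP; apply: cauchy_exP => eps eps0.
have [N0 hN0] := ev_lt _ _ he eps0.
exists (v N0); exists N0 => // n /= hn.
rewrite /ball /= distrC -(subnKC hn).
by apply: le_lt_trans (hv _ _) (hN0 _ (leqnn _)).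
Qed.

Lemma c_cvg u e : e @ \oo --> 0 ->
  (forall n k, cn (u (n + k)%N - u n) <= e n) -> cvg (u @ \oo).
Proof.
move=> he hu.
have cr : cvg ((fun n => Re (u n)) @ \oo).
  apply: (real_cauchy _ _ he) => n k; apply: le_trans (hu n k).
  by rewrite -raddfB; exact: cn_Re.
have ci : cvg ((fun n => Im (u n)) @ \oo).
  apply: (real_cauchy _ _ he) => n k; apply: le_trans (hu n k).
  by rewrite -raddfB; exact: cn_Im.
apply/cvg_ex; exists (lim ((fun n => Re (u n)) @ \oo) +i* lim ((fun n => Im (u n)) @ \oo)).
apply/cvg_ballP => eps eps0.
move: eps0; rewrite ltcE /= => /andP[/eqP him hre].
have hr2 : 0 < complex.Re eps / 2 by rewrite divr_gt0.
have [N1 _ h1] := (cvgrPdist_lt _ _).1 cr _ hr2.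
have [N2 _ h2] := (cvgrPdist_lt _ _).1 ci _ hr2.
exists (maxn N1 N2) => // n /= hn.
rewrite /ball /= cnE.
have -> : eps = (complex.Re eps)%:C by case: eps him {hr2 h1 h2 hre} => a b /= ->.
rewrite ltcR; apply: le_lt_trans (cn_ReIm _) _.
rewrite raddfB /= [complex.Im _]raddfB /=.
rewrite [complex.Re eps](splitr (complex.Re eps)) ltrD //.
  by apply: h1; apply: leq_trans (leq_maxl _ _) hn.
by apply: h2; apply: leq_trans (leq_maxr _ _) hn.
Qed.
End Cvg.
Section MxCvg.
Variable R : realType.
Lemma mx_cvg_entries a b (U : nat -> 'M[R[i]]_(a,b)) (L : 'M[R[i]]_(a,b)) :
  (forall i j, (fun n => U n i j) @ \oo --> L i j) -> U @ \oo --> L.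
Proof.
move=> hU; apply/cvg_ballP => eps eps0.
have : \forall n \near \oo, forall i j, ball (L i j) eps (U n i j).
  apply: filter_forall => i; apply: filter_forall => j.
  exact: (cvg_ball (hU i j)).
apply: filterS => n h; split => //.
Qed.

Lemma mx_cvg a b (U : nat -> 'M[R[i]]_(a,b)) (e : nat -> R) : e @ \oo --> 0 ->
  (forall n k, nu (U (n + k)%N - U n) <= e n) -> cvg (U @ \oo).
Proof.
move=> he hU; apply/cvg_ex.
exists (\matrix_(i, j) lim ((fun n => U n i j) @ \oo)).
apply: mx_cvg_entries => i j; rewrite mxE.
apply: (c_cvg _ _ _ he) => n k.
apply: le_trans (hU n k); have := @nu_entry R _ _ (U (n + k)%N - U n) i j; by rewrite !mxE.
Qed.

Lemma mulmx_cvg a b c d (U : nat -> 'M[R[i]]_(b,c)) (L : 'M[R[i]]_(b,c)) (C : 'M[R[i]]_(a,b)) (B : 'M[R[i]]_(c,d)) :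
  U @ \oo --> L -> (fun n => C *m U n *m B) @ \oo --> C *m L *m B.
Proof.
move=> hU; apply: mx_cvg_entries => i j.
rewrite mxE; under eq_cvg do rewrite mxE.
apply: cvg_big => // [|l _]; first exact: add_continuous.
rewrite mxE; under eq_cvg do rewrite mxE.
apply: cvgMl.
apply: cvg_big => // [|k _]; first exact: add_continuous.
apply: cvgMr.
exact: (cvg_comp _ _ hU (@coord_continuous _ _ _ k l L)).
Qed.
End MxCvg.
Fixpoint pprod (R : realType) (N : nat) (a : nat -> R[i]) (M : 'M[R[i]]_N) (n : nat) : 'M[R[i]]_N :=
  match n with
  | 0 => 1%:M
  | n.+1 => pprod R N a M n *m invmx (1%:M - a n *: M)
  end.

Arguments pprod {R N}.
Section Prod.
Variable R : realType.
Lemma eqle (x y : R) : x = y -> x <= y. Proof. by move->. Qed.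

Lemma qpartialE N (q : R) (A : 'M[R[i]]_N) z n :
  qpartial q A z n = pprod (fun j => (1 - q%:C) * q%:C ^+ j) (z *: A) n.
Proof.
elim: n => [//|n IH] /=; rewrite IH /qfactor scalerA.
by rewrite [_ * z]mulrC mulrA.
Qed.

Lemma cnX (x : R[i]) n : cn (x ^+ n) = cn x ^+ n.
Proof. by elim: n => [|n IH]; rewrite ?expr0 ?cn1 // !exprS cnM IH. Qed.

Lemma unit_small N (X : 'M[R[i]]_N) : nu X < 1 -> (1%:M - X) \in unitmx.
Proof.
move=> hX; case: (boolP (\det (1%:M - X) == 0)) => [/det0P [v v0 hv]|h];
  last by rewrite unitmxE unitfE.
exfalso; move: hv; rewrite mulmxBr mulmx1 => /eqP; rewrite subr_eq0 => /eqP hv.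
have h1 : nu v <= nu v * nu X by rewrite {1}hv; exact: nuM.
have h0 : nu v = 0.
  apply/eqP; rewrite eq_le nu_ge0 andbT.
  have := nu_ge0 v; have := nu_ge0 X; nra.
by move: v0; rewrite (nu_eq0 h0) eqxx.
Qed.

Variables (q : R) (hq0 : 0 <= q) (hq1 : q < 1).
Let a j : R[i] := (1 - q%:C) * q%:C ^+ j.
Lemma cn_a j : cn (a j) = (1 - q) * q ^+ j.
Proof.
rewrite /a cnM cnX cnR ger0_norm //.
have -> : 1 - q%:C = (1 - q)%:C by rewrite rmorphB rmorph1.
by rewrite cnR ger0_norm // subr_ge0 ltW.
Qed.
Lemma cn_a_le1 j : cn (a j) <= 1.
Proof.
rewrite cn_a; have := exprn_ge0 j hq0; have := exprn_ile1 j hq0 (ltW hq1).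
have := hq0; have := hq1; nra.
Qed.

Variables (N : nat) (M : 'M[R[i]]_N) (ht : nu M <= 1 / 2).
Let t := nu M.
Let P := pprod a M.

Lemma unit_a j : (1%:M - a j *: M) \in unitmx.
Proof.
apply: unit_small; rewrite nuZ.
have := cn_a_le1 j; have := cn_ge0 (a j); have := nu_ge0 M; rewrite -/t.
move: ht; rewrite -/t; nra.
Qed.

Lemma P_bound0 n : nu (P n) * (1 - t * (1 - q ^+ n)) <= N%:R.
Proof.
elim: n => [|n IH]; first by rewrite /P /= nu1 expr0 subrr mulr0 subr0 mulr1.
have hPS : P n.+1 *m (1%:M - a n *: M) = P n by rewrite /P /= mulmxKV // unit_a.
have hP' : nu (P n.+1) <= nu (P n) + nu (P n.+1) * (cn (a n) * t).
  have e : P n.+1 = P n + P n.+1 *m (a n *: M).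
    by rewrite -hPS mulmxBr mulmx1 subrK.
  rewrite {1}e; apply: le_trans (nuD _ _) _; rewrite lerD2l /t -nuZ; exact: nuM.
rewrite cn_a in hP'.
have hqn0 := exprn_ge0 n hq0; have hqn1 := exprn_ile1 n hq0 (ltW hq1).
have t0 : 0 <= t := nu_ge0 M.
have p0 := nu_ge0 (P n); have p'0 := nu_ge0 (P n.+1).
move: IH hP'; set p := nu (P n); set p' := nu (P n.+1); set x := q ^+ n => IH hP'.
have S0 : 0 <= t * (1 - x) by rewrite mulr_ge0 // subr_ge0.
have B0 : 0 <= (1 - q) * x * t by rewrite !mulr_ge0 // subr_ge0 ltW.
have S1 : 0 <= 1 - t * (1 - x).
  rewrite subr_ge0; apply: le_trans (_ : t * 1 <= _).
    by apply: ler_wpM2l => //; rewrite lerBlDr lerDl.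
  by rewrite mulr1; apply: le_trans ht _; rewrite ler_pdivrMr // mul1r ler1n.
have g1 : 1 - t * (1 - q ^+ n.+1) = (1 - t * (1 - x)) - (1 - q) * x * t.
  by rewrite exprS /x; ring.
have g3 : p' * (1 - (1 - q) * x * t) <= p.
  by rewrite mulrBr mulr1 lerBlDr.
rewrite g1; apply: le_trans IH.
have H := ler_wpM2r S1 g3; have K := mulr_ge0 (mulr_ge0 S0 p'0) B0.
have -> : p' * (1 - t * (1 - x) - (1 - q) * x * t) =
   p' * (1 - (1 - q) * x * t) * (1 - t * (1 - x)) - t * (1 - x) * p' * ((1 - q) * x * t).
  by ring.
by apply: le_trans H; rewrite lerBlDr lerDl.
Qed.

Lemma P_bound n : nu (P n) <= 2 * N%:R.
Proof.
have h := P_bound0 n.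
have hqn0 := exprn_ge0 n hq0; have hqn1 := exprn_ile1 n hq0 (ltW hq1).
have t0 : 0 <= t := nu_ge0 M.
have p0 := nu_ge0 (P n).
move: h; set p := nu (P n); set x := q ^+ n => h.
have h1 : t * (1 - x) <= t.
  by rewrite -[X in _ <= X]mulr1; apply: ler_wpM2l => //; rewrite lerBlDr lerDl.
have ht' : t <= 1 / 2 := ht.
have hh : 1 / 2 <= 1 - t * (1 - x) by lra.
have h2 : p * (1 / 2) <= N%:R by apply: le_trans (ler_wpM2l p0 hh) h.
lra.
Qed.

Lemma P_step n : nu (P n.+1 - P n) <= 2 * N%:R * t * ((1 - q) * q ^+ n).
Proof.
have hPS : P n.+1 *m (1%:M - a n *: M) = P n by rewrite /P /= mulmxKV // unit_a.
have -> : P n.+1 - P n = P n.+1 *m (a n *: M).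
  by rewrite -hPS mulmxBr mulmx1 opprB addrC subrK.
apply: le_trans (nuM _ _) _; rewrite nuZ cn_a.
have hb := P_bound n.+1; have t0 : 0 <= t := nu_ge0 M.
have y0 : 0 <= (1 - q) * q ^+ n by rewrite mulr_ge0 ?exprn_ge0 // subr_ge0 ltW.
have := ler_wpM2r (mulr_ge0 y0 t0) hb.
rewrite /t => h; apply: le_trans h _; apply: eqle; ring.
Qed.

Lemma P_cauchy n k : nu (P (n + k)%N - P n) <= 2 * N%:R * t * q ^+ n.
Proof.
suff : nu (P (n + k)%N - P n) <= 2 * N%:R * t * (q ^+ n - q ^+ (n + k)).
  have y0 := exprn_ge0 (n + k) hq0; have t0 : 0 <= t := nu_ge0 M.
  move=> h; apply: le_trans h _; apply: ler_wpM2l.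
    by rewrite !mulr_ge0.
  by rewrite lerBlDr lerDl.
elim: k => [|k IH]; first by rewrite addn0 !subrr nu0 mulr0.
have -> : P (n + k.+1)%N - P n = (P (n + k).+1 - P (n + k)%N) + (P (n + k)%N - P n).
  by rewrite addnS addrA subrK.
apply: le_trans (nuD _ _) _.
apply: le_trans (lerD (P_step _) IH) _.
rewrite addnS exprS; apply: eqle; ring.
Qed.

Lemma P_cvg : cvg (P @ \oo).
Proof.
apply: (@mx_cvg R _ _ P (fun n => 2 * N%:R * t * q ^+ n)); last exact: P_cauchy.
have -> : 0 = 2 * N%:R * t * 0 :> R by rewrite mulr0.
apply: cvgMr; apply: cvg_expr; by rewrite ger0_norm.
Qed.
End Prod.
Section PF.
Variable R : realType.
Lemma pprodS N (a : nat -> R[i]) (M : 'M[R[i]]_N) n :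
  pprod a M n.+1 = pprod a M n *m invmx (1%:M - a n *: M).
Proof. by []. Qed.

Lemma GG N (M : 'M[R[i]]_N) (x y : R[i]) :
  (1%:M - x *: M) \in unitmx -> (1%:M - y *: M) \in unitmx -> x != y ->
  invmx (1%:M - x *: M) *m invmx (1%:M - y *: M) =
  (x - y)^-1 *: (x *: invmx (1%:M - x *: M) - y *: invmx (1%:M - y *: M)).
Proof.
move=> ux uy xy.
set Gx := invmx _; set Gy := invmx _.
have e : x *: Gx - y *: Gy = Gx *m ((x - y) *: 1%:M) *m Gy.
  have e1 : Gx = Gx *m (1%:M - y *: M) *m Gy by rewrite -mulmxA mulmxV // mulmx1.
  have e2 : Gy = Gx *m (1%:M - x *: M) *m Gy by rewrite mulVmx // mul1mx.
  have e3 : (x - y) *: (1%:M : 'M[R[i]]_N) = x *: (1%:M - y *: M) - y *: (1%:M - x *: M).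
    by rewrite !scalerBr !scalerA [y * x]mulrC opprB addrA subrK scalerBl.
  by rewrite e3 mulmxBr mulmxBl -!scalemxAr -!scalemxAl -e1 -e2.
rewrite e -scalemxAr mulmx1 -scalemxAl scalerA mulVf ?scale1r //.
by rewrite subr_eq0.
Qed.
Lemma pf (a : nat -> R[i]) (hinj : forall i j, a i = a j -> i = j) n :
  exists w : nat -> R[i], forall N (M : 'M[R[i]]_N),
    (forall j, (1%:M - a j *: M) \in unitmx) ->
    pprod a M n.+1 = \sum_(j < n.+1) w j *: invmx (1%:M - a j *: M).
Proof.
elim: n => [|n [w hw]].
  exists (fun=> 1) => N M _.
  by rewrite big_ord1 scale1r pprodS /= mul1mx.
pose w' j := if (j < n.+1)%N then w j * a j / (a j - a n.+1)
             else - \sum_(k < n.+1) w k * a n.+1 / (a k - a n.+1).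
exists w' => N M hu.
set G := fun j => invmx (1%:M - a j *: M).
rewrite pprodS hw // mulmx_suml [RHS]big_ord_recr /=.
have hne : forall j : 'I_n.+1, a j != a n.+1.
  move=> j; apply/eqP => /hinj h; have := ltn_ord j; by rewrite h ltnn.
rewrite (eq_bigr (fun j : 'I_n.+1 => (w j * a j / (a j - a n.+1)) *: G j
          - (w j * a n.+1 / (a j - a n.+1)) *: G n.+1)); last first.
  move=> j _; rewrite -scalemxAl GG // scalerA scalerBr !scalerA.
  by congr (_ *: _ - _ *: _); ring.
rewrite sumrB; congr (_ + _).
  apply: eq_bigr => j _; rewrite /w' /=.
  by rewrite ltn_ord.
rewrite /w' ltnn scaleNr scaler_suml.
done.
Qed.
End PF.
Section Main.
Variable R : realType.

Lemma pf_q (q : R) (hq0 : 0 <= q) (hq1 : q < 1) n :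
  exists w : nat -> R[i], forall N (M : 'M[R[i]]_N),
    (forall j, (1%:M - ((1 - q%:C) * q%:C ^+ j) *: M) \in unitmx) ->
    pprod (fun j => (1 - q%:C) * q%:C ^+ j) M n.+1 =
    \sum_(j < n.+1) w j *: invmx (1%:M - ((1 - q%:C) * q%:C ^+ j) *: M).
Proof.
have [q0|qn0] := eqVneq q 0.
  exists (fun j => if j == 0%N then 1 else 0) => N M _.
  rewrite big_ord_recl /= scale1r big1 ?addr0; last first.
    by move=> j _; rewrite scale0r.
  rewrite q0 (_ : (0:R)%:C = 0) //; elim: n => [|n IH]; first by rewrite /= mul1mx.
  rewrite pprodS IH.
  have -> : (1 - 0) * (0:R[i]) ^+ n.+1 = 0 by rewrite exprS mul0r mulr0.
  by rewrite scale0r (subr0 (1%:M : 'M[R[i]]_N)) invmx1 mulmx1.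
apply: pf => i j.
have hq : 0 < q by rewrite lt_neqAle eq_sym qn0.
have e : forall k, (1 - q%:C) * q%:C ^+ k = ((1 - q) * q ^+ k)%:C.
  by move=> k; rewrite rmorphM rmorphB rmorph1 rmorphXn.
rewrite !e => /complexI /mulfI h; apply: (ieexprIn hq (negbT (lt_eqF hq1))); apply: h.
by rewrite subr_eq0 eq_sym (lt_eqF hq1).
Qed.

Lemma seq_eq (q : R) (hq0 : 0 <= q) (hq1 : q < 1) n m N N'
  (C : 'M[R[i]]_(n, N)) (M : 'M[R[i]]_N) (B : 'M[R[i]]_(N, m))
  (C' : 'M[R[i]]_(n, N')) (M' : 'M[R[i]]_N') (B' : 'M[R[i]]_(N', m)) :
  (forall j, (1%:M - ((1 - q%:C) * q%:C ^+ j) *: M) \in unitmx) ->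
  (forall j, (1%:M - ((1 - q%:C) * q%:C ^+ j) *: M') \in unitmx) ->
  (forall j, C *m invmx (1%:M - ((1 - q%:C) * q%:C ^+ j) *: M) *m B =
             C' *m invmx (1%:M - ((1 - q%:C) * q%:C ^+ j) *: M') *m B') ->
  forall k, C *m pprod (fun j => (1 - q%:C) * q%:C ^+ j) M k.+1 *m B =
            C' *m pprod (fun j => (1 - q%:C) * q%:C ^+ j) M' k.+1 *m B'.
Proof.
move=> u u' h k; have [w hw] := pf_q q hq0 hq1 k.
rewrite (hw _ _ u) (hw _ _ u') !mulmx_sumr !mulmx_suml.
apply: eq_bigr => j _.
by rewrite -!scalemxAr -!scalemxAl h.
Qed.
End Main.
Theorem proposition7p1 (R : realType) (n m N N' : nat) (q : R)
  (hq0 : 0 <= q) (hq1 : q < 1)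
  (Rf : R[i] -> 'M[R[i]]_(n, m))
  (C : 'M[R[i]]_(n, N)) (A : 'M[R[i]]_N) (B : 'M[R[i]]_(N, m))
  (C' : 'M[R[i]]_(n, N')) (A' : 'M[R[i]]_N') (B' : 'M[R[i]]_(N', m)) :
  (\forall z \near (0 : R[i]),
      Rf z = C *m invmx (1%:M - z *: A) *m B
   /\ Rf z = C' *m invmx (1%:M - z *: A') *m B') ->
  \forall z \near (0 : R[i]),
      cvg (qpartial q A z @ \oo)
   /\ cvg (qpartial q A' z @ \oo)
   /\ C *m lim (qpartial q A z @ \oo) *m B
      = C' *m lim (qpartial q A' z @ \oo) *m B'.
Proof.
move=> H.
have [r r0 hr] := (nbhs_ballP _ _).1 H.
move: r0 => /= r0; move: r0; rewrite ltcE /= => /andP[/eqP rim rre].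
have re : r = (complex.Re r)%:C by case: r rim {hr rre} => x y /= ->.
set rho := complex.Re r in re rre.
set K := nu A + nu A' + 1.
have K0 : 0 < K by rewrite ltr_pwDr // addr_ge0 // nu_ge0.
have i0 : 0 < 1 / (2 * K) by rewrite divr_gt0 // mulr_gt0.
apply/nbhs_ballP; exists ((Num.min rho (1 / (2 * K)))%:C); first by rewrite /= (_ : (0:R[i]) = (0:R)%:C) // ltcR lt_min rre i0.
move=> z hz.
have hcz : cn z < Num.min rho (1 / (2 * K)).
  by move: hz; rewrite /ball /= sub0r normrN cnE ltcR.
move: hcz; rewrite lt_min => /andP[hzr hzK].
have hzK' : cn z * K <= 1 / 2.
  move: hzK; rewrite ltr_pdivlMr ?mulr_gt0 // mulrA [cn z * 2]mulrC -mulrA => h.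
  have := cn_ge0 z; lra.
have hA : nu (z *: A) <= 1 / 2.
  rewrite nuZ; apply: le_trans hzK'; apply: ler_wpM2l; first exact: cn_ge0.
  by rewrite /K -addrA lerDl addr_ge0 // nu_ge0.
have hA' : nu (z *: A') <= 1 / 2.
  rewrite nuZ; apply: le_trans hzK'; apply: ler_wpM2l; first exact: cn_ge0.
  by rewrite /K addrAC lerDr addr_ge0 // nu_ge0.
have hb : forall j, ball (0 : R[i]) r (((1 - q%:C) * q%:C ^+ j) * z).
  move=> j; rewrite /ball /= sub0r normrN cnE re ltcR cnM.
  apply: le_lt_trans hzr; rewrite -[X in _ <= X]mul1r; apply: ler_wpM2r.
    exact: cn_ge0.
  exact: (@cn_a_le1 R q hq0 hq1 j).
have hcomb : forall j,
  C *m invmx (1%:M - ((1 - q%:C) * q%:C ^+ j) *: (z *: A)) *m B =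
  C' *m invmx (1%:M - ((1 - q%:C) * q%:C ^+ j) *: (z *: A')) *m B'.
  by move=> j; have [h1 h2] := hr _ (hb j); rewrite !scalerA -h1 -h2.
have eA : qpartial q A z = pprod (fun j => (1 - q%:C) * q%:C ^+ j) (z *: A).
  by apply: funext => k; exact: qpartialE.
have eA' : qpartial q A' z = pprod (fun j => (1 - q%:C) * q%:C ^+ j) (z *: A').
  by apply: funext => k; exact: qpartialE.
rewrite eA eA'.
have cA := @P_cvg R q hq0 hq1 N (z *: A) hA.
have cA' := @P_cvg R q hq0 hq1 N' (z *: A') hA'.
split => //; split => //.
have s1 := @mulmx_cvg R _ _ _ _ _ _ C B cA.
have s2 := @mulmx_cvg R _ _ _ _ _ _ C' B' cA'.
rewrite -cvg_shiftS in s1; rewrite -cvg_shiftS in s2.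
have heq := @seq_eq R q hq0 hq1 n m N N' C (z *: A) B C' (z *: A') B'
  (@unit_a R q hq0 hq1 N (z *: A) hA) (@unit_a R q hq0 hq1 N' (z *: A') hA') hcomb.
move: s1; rewrite (_ : (fun k => _) = (fun k => C' *m pprod (fun j => (1 - q%:C) * q%:C ^+ j) (z *: A') k.+1 *m B')); last first.
  by apply: funext => k; exact: heq.
move=> s1; exact: (cvg_unique _ s1 s2).
Qed.
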